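(* Let $\mathcal{H}_A,\mathcal{H}_B,\mathcal{H}_C$ be finite-dimensional complex Hilbert spaces and let $|\psi\rangle\in\mathcal{H}_A\otimes\mathcal{H}_B\otimes\mathcal{H}_C$ be a unit vector, with $\rho=|\psi\rangle\langle\psi|$. Let $d_A$ be the rank of the reduced state $\rho_A=\mathrm{Tr}_{BC}\,\rho$, and assume $d_A\ge 2$. Then $$\sqrt{\tfrac{2}{d_A(d_A-1)}}\; N_{A:CB}\;\le\; N_{AC:B}+N_{AB:C},$$ where $N_{A:CB}$, $N_{AC:B}$, $N_{AB:C}$ denote the negativities of $\rho$ with respect to the bipartitions $A|BC$, $AC|B$ and $AB|C$ respectively.
   Context: For a bipartite state $\rho_{XY}$ on $\mathcal{H}_X\otimes\mathcal{H}_Y$, the negativity is $N_{X:Y}=\frac{\|\rho_{XY}^{T_X}\|_1-1}{2}$, where $\rho_{XY}^{T_X}$ is the partial transpose with respect to subsystem $X$ (in any fixed basis) and $\|\sigma\|_1=\mathrm{Tr}\sqrt{\sigma^\dagger\sigma}$ is the trace norm. For a tripartite state, $N_{AC:B}$ means the negativity for the bipartition with $X=AC$ and $Y=B$, and similarly for the others. *)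

(* Defs.v *)
From HB Require Import structures.
From mathcomp Require Import all_boot all_order all_algebra.
From mathcomp Require Import algC.
Set Implicit Arguments. Unset Strict Implicit. Unset Printing Implicit Defensive.
Import Order.TTheory GRing.Theory Num.Theory Num.Def.
Local Open Scope ring_scope.

(* H_A = C^dA, H_B = C^dB, H_C = C^dC; the basis of H_A (x) H_B (x) H_C is
   indexed by the finite type idx3 dA dB dC = 'I_dA * 'I_dB * 'I_dC,
   with elements ((a, b), c). *)
Definition idx3 (dA dB dC : nat) := ('I_dA * 'I_dB * 'I_dC)%type.

Definition adjmx m n (M : 'M[algC]_(m, n)) : 'M[algC]_(n, m) :=
  map_mx (fun x : algC => x^*) (M^T).

(* Square root of a positive semidefinite (hence normal) matrix via its
   spectral decomposition A = P^-1 diag(l) P (P unitary): sqrt A = P^-1 diag(sqrt l) P *)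
Definition sqrtmx n (A : 'M[algC]_n) : 'M[algC]_n :=
  invmx (spectralmx A) *m diag_mx (map_mx sqrtC (spectral_diag A)) *m spectralmx A.

Definition trnorm n (s : 'M[algC]_n) : algC := \tr (sqrtmx (adjmx s *m s)).

Definition mx_of (T : finType) (f : T -> T -> algC) : 'M[algC]_#|T| :=
  \matrix_(i, j) f (enum_val i) (enum_val j).

Definition negativity_of_pt (T : finType) (ptrho : T -> T -> algC) : algC :=
  (trnorm (mx_of ptrho) - 1) / 2%:R.

Section Tri.
Variables dA dB dC : nat.
Local Notation T := (idx3 dA dB dC).

Definition proj_state (psi : T -> algC) : T -> T -> algC :=
  fun x y => psi x * (psi y)^*.

Definition ptA (rho : T -> T -> algC) : T -> T -> algC :=
  fun x y => rho ((y.1.1, x.1.2), x.2) ((x.1.1, y.1.2), y.2).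
Definition ptAC (rho : T -> T -> algC) : T -> T -> algC :=
  fun x y => rho ((y.1.1, x.1.2), y.2) ((x.1.1, y.1.2), x.2).
Definition ptAB (rho : T -> T -> algC) : T -> T -> algC :=
  fun x y => rho ((y.1.1, y.1.2), x.2) ((x.1.1, x.1.2), y.2).

Definition neg_A_CB (rho : T -> T -> algC) := negativity_of_pt (ptA rho).
Definition neg_AC_B (rho : T -> T -> algC) := negativity_of_pt (ptAC rho).
Definition neg_AB_C (rho : T -> T -> algC) := negativity_of_pt (ptAB rho).

Definition reducedA (rho : T -> T -> algC) : 'M[algC]_dA :=
  \matrix_(i, i') \sum_(j : 'I_dB) \sum_(k : 'I_dC) rho ((i, j), k) ((i', j), k).
End Tri.

(* Main.v *)
Require Import Defs.
From HB Require Import structures.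
From mathcomp Require Import all_boot all_order all_algebra.
From mathcomp Require Import algC.
From mathcomp Require Import ring zify.
Set Implicit Arguments. Unset Strict Implicit. Unset Printing Implicit Defensive.
Import Order.TTheory GRing.Theory Num.Theory.
Local Open Scope ring_scope.

Lemma trnorm_spec n m (X : 'M[algC]_n) (W1 : 'M[algC]_(n,m)) (W2 : 'M[algC]_(m,n))
  (dl : 'rV[algC]_m) :
  W1 *m W2 = 1%:M -> W2 *m W1 = 1%:M ->
  adjmx X *m X = W1 *m diag_mx dl *m W2 ->
  trnorm X = \sum_j sqrtC (dl 0 j).
Proof.
move=> h12 h21 hX.
rewrite /trnorm /sqrtmx.
set A := adjmx X *m X.
have An : A \is normalmx.
  apply/normalmxP.
  have -> : (A ^t* )%sesqui = A.
    rewrite /A /adjmx trmx_mul map_mxM !map_trmx trmxK.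
    by rewrite -map_mx_comp (map_mx_id (@conjCK _)).
  by [].
have /orthomx_spectralP hA := An.
set P := spectralmx A in hA *; set D := spectral_diag A in hA *.
have Pu : P \in unitmx by exact: spectral_unit.
set V := P *m W1. set V' := W2 *m invmx P.
have VV' : V *m V' = 1%:M.
  by rewrite /V /V' mulmxA -(mulmxA P) h12 mulmx1 mulmxV.
have V'V : V' *m V = 1%:M.
  by rewrite /V /V' mulmxA -(mulmxA W2) mulVmx // mulmx1.
have key : diag_mx D *m V = V *m diag_mx dl.
  have e1 : P *m A *m W1 = diag_mx D *m V.
    by rewrite {1}hA (mulmxA P (invmx P *m diag_mx D)) mulmxA mulmxV // mul1mx -mulmxA.
  have e2 : P *m A *m W1 = V *m diag_mx dl.
    by rewrite /A hX /V !mulmxA -(mulmxA _ W2) h21 mulmx1.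
  by rewrite -e1 e2.
clearbody V V'.
have keyS : diag_mx (map_mx sqrtC D) *m V = V *m diag_mx (map_mx sqrtC dl).
  apply/matrixP => i j; move/matrixP: key => /(_ i j).
  rewrite (mul_diag_mx D V) (mul_mx_diag V dl) (mul_diag_mx (map_mx sqrtC D) V) (mul_mx_diag V (map_mx sqrtC dl)) !mxE.
  have [->|nz] := eqVneq (V i j) 0; first by move=> _; rewrite mul0r mulr0.
  rewrite [V i j * _]mulrC => /(mulIf nz) ->; by rewrite mulrC.
rewrite mxtrace_mulC (mulmxA P) mulmxV // mul1mx.
rewrite -[diag_mx (map_mx sqrtC D)]mulmx1 -VV' mulmxA keyS.
rewrite -(mulmxA V) mxtrace_mulC -mulmxA V'V mulmx1 mxtrace_diag.
by apply: eq_bigr => j _; rewrite mxE.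
Qed.

Lemma sum_enumv (T : finType) (F : T -> algC) :
  \sum_(i < #|T|) F (enum_val i) = \sum_x F x.
Proof.
rewrite [RHS](reindex (@enum_val T (mem T))) //.
by exists enum_rank => x _; [apply: enum_valK | apply: enum_rankK].
Qed.

Lemma trnorm_kernel (T U : finType) (f : T -> T -> algC)
  (w1 : T -> U -> algC) (w2 : U -> T -> algC) (dl : U -> algC) :
  (forall x y, \sum_u w1 x u * w2 u y = (x == y)%:R) ->
  (forall u v, \sum_x w2 u x * w1 x v = (u == v)%:R) ->
  (forall x y, \sum_z (f z x)^* * f z y = \sum_u w1 x u * dl u * w2 u y) ->
  trnorm (mx_of f) = \sum_u sqrtC (dl u).
Proof.
move=> h12 h21 hf.
pose W1 : 'M[algC]_(#|T|, #|U|) := \matrix_(i, j) w1 (enum_val i) (enum_val j).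
pose W2 : 'M[algC]_(#|U|, #|T|) := \matrix_(i, j) w2 (enum_val i) (enum_val j).
pose d : 'rV[algC]_#|U| := \row_j dl (enum_val j).
rewrite (@trnorm_spec _ _ _ W1 W2 d).
- by rewrite -(sum_enumv (fun u => sqrtC (dl u))); apply: eq_bigr => j _; rewrite mxE.
- apply/matrixP => i k; rewrite !mxE.
  under eq_bigr do rewrite !mxE.
  rewrite (sum_enumv (fun u => w1 (enum_val i) u * w2 u (enum_val k))) h12.
  by rewrite (inj_eq enum_val_inj).
- apply/matrixP => i k; rewrite !mxE.
  under eq_bigr do rewrite !mxE.
  rewrite (sum_enumv (fun u => w2 (enum_val i) u * w1 u (enum_val k))) h21.
  by rewrite (inj_eq enum_val_inj).
- apply/matrixP => i k; rewrite !mxE.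
  under eq_bigr do rewrite !mxE.
  rewrite (sum_enumv (fun z => (f z (enum_val i))^* * f z (enum_val k))) hf.
  rewrite -sum_enumv; apply: eq_bigr => j _.
  by rewrite !mxE (bigD1 j) //= big1 ?addr0 => [|l /negbTE nl];
    rewrite !mxE ?eqxx ?nl ?mulr1n ?mulr0n ?mulr0 ?mul0r.
Qed.

Section Gram.
Local Open Scope sesquilinear_scope.
Variables (n p : nat) (G : 'M[algC]_(n,p)).
Definition gram := G *m G ^t*.

Lemma gram_adj : gram ^t* = gram.
Proof.
rewrite /gram trmx_mul map_mxM trmxCK //.
Qed.

Lemma gram_normal : gram \is normalmx.
Proof. by apply/normalmxP; rewrite gram_adj. Qed.

Lemma gram_decomp :
  gram = invmx (spectralmx gram) *m diag_mx (spectral_diag gram) *m spectralmx gram.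
Proof. exact/orthomx_spectralP/gram_normal. Qed.

Lemma gram_diag : diag_mx (spectral_diag gram) =
   spectralmx gram *m gram *m (spectralmx gram) ^t*.
Proof.
set P := spectralmx gram.
have Pu : P \is unitarymx by exact: spectral_unitarymx.
have PP : P *m P ^t* = 1%:M by apply/unitarymxP.
rewrite {2}gram_decomp -/P invmx_unitary //.
rewrite (mulmxA P (P ^t* *m _)) (mulmxA P (P ^t*)) PP mul1mx.
by rewrite -mulmxA PP mulmx1.
Qed.

Lemma gram_d_ge0 k : 0 <= spectral_diag gram 0 k.
Proof.
have := congr1 (fun M : 'M[algC]_n => M k k) gram_diag.
rewrite /= mxE eqxx mulr1n => ->.
set P := spectralmx gram.
have -> : P *m gram *m P ^t* = (P *m G) *m (P *m G) ^t*.
  by rewrite /gram trmx_mul map_mxM !mulmxA.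
rewrite mxE; apply: sumr_ge0 => j _.
by rewrite !mxE mul_conjC_ge0.
Qed.

Lemma gram_tr : \sum_k spectral_diag gram 0 k = \tr gram.
Proof.
rewrite {2}gram_decomp mxtrace_mulC (mulmxA (spectralmx gram)) mulmxV ?spectral_unit //.
by rewrite mul1mx mxtrace_diag.
Qed.

Lemma gram_tr2 : \sum_k (spectral_diag gram 0 k) ^+ 2 = \tr (gram *m gram).
Proof.
set P := spectralmx gram; set d := spectral_diag gram.
have Pu : P \in unitmx by exact: spectral_unit.
have -> : gram *m gram = invmx P *m diag_mx (\row_k (d 0 k * d 0 k)) *m P.
  rewrite gram_decomp -/P -/d.
  rewrite -!mulmxA (mulmxA P (invmx P)) mulmxV // mul1mx.
  by rewrite !mulmxA -(mulmxA (invmx P) (diag_mx d) (diag_mx d)) mulmx_diag.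
rewrite mxtrace_mulC (mulmxA P) mulmxV // mul1mx mxtrace_diag.
by apply: eq_bigr => k _; rewrite mxE expr2.
Qed.

Lemma diag_count m (d : 'rV[algC]_m) :
  leq #|[pred k : 'I_m | d 0 k != 0]| (\rank (diag_mx d)).
Proof.
set Z := [pred k : 'I_m | d 0 k != 0].
pose z := (@enum_val _ (mem Z)).
pose E : 'M[algC]_(#|Z|, m) := \matrix_(i, j) (j == z i)%:R.
pose F : 'M[algC]_(m, #|Z|) := \matrix_(j, i) ((j == z i)%:R / d 0 (z i)).
have EF : E *m diag_mx d *m F = 1%:M.
  apply/matrixP => i i'; rewrite !mxE (bigD1 (z i)) //= big1 ?addr0.
    rewrite mul_mx_diag !mxE eqxx mul1r.
    have zZ : z i \in Z by exact: enum_valP.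
    have [<-|ne] := eqVneq i i'.
      by rewrite eqxx mul1r mulfV.
    have -> : (z i == z i') = false by rewrite (inj_eq enum_val_inj) (negbTE ne).
    by rewrite mul0r mulr0.
  move=> j /negbTE nj; rewrite mul_mx_diag !mxE nj mul0r.
  by rewrite mul0r.
have := mxrank1 algC #|Z|; rewrite -EF => h.
rewrite -{1}h; apply: leq_trans (mxrankM_maxl _ _) _.
exact: mxrankM_maxr.
Qed.

Lemma gram_count : leq #|[pred k : 'I_n | spectral_diag gram 0 k != 0]| (\rank gram).
Proof.
apply: leq_trans (diag_count _) _.
rewrite gram_diag; apply: leq_trans (mxrankM_maxl _ _) _.
exact: mxrankM_maxr.
Qed.

Lemma gram_rank : (\rank G <= \rank gram)%N.
Proof.
set K := kermx gram.
have KG : K *m G = 0.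
  have h0 : (K *m G) *m (K *m G) ^t* = 0.
    rewrite trmx_mul map_mxM !mulmxA -(mulmxA K G) -/gram.
    by rewrite (@mulmx_ker _ _ _ gram) mul0mx.
  apply/matrixP => i j; rewrite mxE.
  have /matrixP/(_ i i) := h0; rewrite !mxE => /eqP.
  rewrite psumr_eq0 => [/allP/(_ j)|]; last by move=> l _; rewrite !mxE mul_conjC_ge0.
  by rewrite mem_index_enum => /(_ isT) /implyP /(_ isT); rewrite !mxE mul_conjC_eq0 => /eqP.
have : (K <= kermx G)%MS by apply/sub_kermxP.
move/mxrankS; rewrite !mxrank_ker => h.
have h1 := rank_leq_row gram; have h2 := rank_leq_row G.
by move: h h1 h2; lia.
Qed.
End Gram.

Lemma sum_pair_mul (I J : finType) (F : I -> algC) (G : J -> algC) :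
  \sum_(p : I * J) F p.1 * G p.2 = (\sum_i F i) * (\sum_j G j).
Proof.
rewrite -(pair_bigA _ (fun i j => F i * G j)) /= mulr_suml.
by apply: eq_bigr => i _; rewrite mulr_sumr.
Qed.

Lemma sum_rank (T : finType) (F : 'I_#|T| -> algC) :
  \sum_x F (enum_rank x) = \sum_i F i.
Proof.
rewrite -(@sum_enumv T (fun x : T => F (enum_rank x))).
by apply: eq_bigr => i _; rewrite enum_valK.
Qed.

Lemma invmx_diag_entry n (P : 'M[algC]_n) (d : 'rV[algC]_n) a b :
  (invmx P *m diag_mx d *m P) a b = \sum_k invmx P a k * d 0 k * P k b.
Proof.
rewrite mxE; apply: eq_bigr => k _.
by rewrite (mul_mx_diag (invmx P) d) mxE.
Qed.

Lemma unit_entry n (P : 'M[algC]_n) a b : P \in unitmx ->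
  \sum_k invmx P a k * P k b = (a == b)%:R.
Proof.
move=> Pu; have := congr1 (fun M : 'M[algC]_n => M a b) (mulVmx Pu).
by rewrite /= !mxE.
Qed.

Lemma unit_entry' n (P : 'M[algC]_n) a b : P \in unitmx ->
  \sum_k P a k * invmx P k b = (a == b)%:R.
Proof.
move=> Pu; have := congr1 (fun M : 'M[algC]_n => M a b) (mulmxV Pu).
by rewrite /= !mxE.
Qed.

Section Bip.
Variables (S R : finType) (psi : S * R -> algC).

Definition GS : 'M[algC]_(#|S|, #|R|) := \matrix_(i, j) psi (enum_val i, enum_val j).
Definition GR : 'M[algC]_(#|R|, #|S|) := \matrix_(j, i) psi (enum_val i, enum_val j).
Definition ptS : S * R -> S * R -> algC :=
  fun x y => psi (y.1, x.2) * (psi (x.1, y.2))^*.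
Definition dS k := spectral_diag (gram GS) 0 k.
Definition dR k := spectral_diag (gram GR) 0 k.

Lemma MS_entry s s' : gram GS (enum_rank s) (enum_rank s') =
  \sum_r psi (s, r) * (psi (s', r))^*.
Proof.
rewrite mxE -(@sum_enumv _ (fun r => psi (s, r) * (psi (s', r))^*)).
by apply: eq_bigr => j _; rewrite !mxE !enum_rankK.
Qed.

Lemma MR_entry r r' : gram GR (enum_rank r) (enum_rank r') =
  \sum_s psi (s, r) * (psi (s, r'))^*.
Proof.
rewrite mxE -(@sum_enumv _ (fun s => psi (s, r) * (psi (s, r'))^*)).
by apply: eq_bigr => j _; rewrite !mxE !enum_rankK.
Qed.

Theorem trnorm_pt :
  trnorm (mx_of ptS) = (\sum_k sqrtC (dS k)) * (\sum_l sqrtC (dR l)).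
Proof.
set pS := spectralmx (gram GS); set pR := spectralmx (gram GR).
have pSu : pS \in unitmx by exact: spectral_unit.
have pRu : pR \in unitmx by exact: spectral_unit.
pose w1 (x : S * R) (u : 'I_#|S| * 'I_#|R|) :=
  pS u.1 (enum_rank x.1) * invmx pR (enum_rank x.2) u.2.
pose w2 (u : 'I_#|S| * 'I_#|R|) (y : S * R) :=
  invmx pS (enum_rank y.1) u.1 * pR u.2 (enum_rank y.2).
pose dl (u : 'I_#|S| * 'I_#|R|) := dS u.1 * dR u.2.
rewrite (@trnorm_kernel _ _ _ w1 w2 dl).
- rewrite -sum_pair_mul; apply: eq_bigr => u _.
  by rewrite /dl sqrtCM // nnegrE gram_d_ge0.
- move=> x y.
  transitivity ((\sum_k invmx pS (enum_rank y.1) k * pS k (enum_rank x.1)) *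
    (\sum_l invmx pR (enum_rank x.2) l * pR l (enum_rank y.2))).
    rewrite -sum_pair_mul; apply: eq_bigr => u _; rewrite /w1 /w2; ring.
  rewrite !unit_entry // (inj_eq enum_rank_inj) (inj_eq enum_rank_inj).
  rewrite -natrM mulnb; case: x y => [x1 x2] [y1 y2] /=.
  by rewrite xpair_eqE eq_sym.
- move=> u v.
  transitivity ((\sum_s pS v.1 (enum_rank s) * invmx pS (enum_rank s) u.1) *
    (\sum_r pR u.2 (enum_rank r) * invmx pR (enum_rank r) v.2)).
    rewrite -sum_pair_mul; apply: eq_bigr => x _; rewrite /w1 /w2; ring.
  rewrite (sum_rank (fun i => pS v.1 i * invmx pS i u.1)).
  rewrite (sum_rank (fun i => pR u.2 i * invmx pR i v.2)).
  rewrite !unit_entry' // -natrM mulnb; case: u v => [u1 u2] [v1 v2] /=.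
  by rewrite xpair_eqE eq_sym.
- move=> x y.
  transitivity (gram GS (enum_rank y.1) (enum_rank x.1) *
                gram GR (enum_rank x.2) (enum_rank y.2)).
    rewrite MS_entry MR_entry mulrC -sum_pair_mul.
    apply: eq_bigr => z _; rewrite /ptS rmorphM /= (conjCK (psi (z.1, x.2))); ring.
  rewrite {1}gram_decomp {1}(gram_decomp GR) !invmx_diag_entry -/pS -/pR.
  rewrite -sum_pair_mul; apply: eq_bigr => u _; rewrite /w1 /w2 /dl /dS /dR; ring.
Qed.
End Bip.

Lemma sum_diag_split (I : finType) (F : I -> I -> algC) :
  \sum_i \sum_j F i j = \sum_i F i i + \sum_(p : I * I | p.1 != p.2) F p.1 p.2.
Proof.
rewrite (eq_bigr (fun i => F i i + \sum_(j | j != i) F i j)); last first.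
  by move=> i _; rewrite (bigD1 i).
rewrite big_split /=; congr (_ + _).
rewrite (pair_big_dep xpredT (fun i j => j != i)) /=.
by apply: eq_bigl => p; rewrite eq_sym.
Qed.

Lemma cauchy_schwarz (I : finType) (B : pred I) (a : I -> algC) :
  (forall i, 0 <= a i) ->
  (\sum_(i | B i) a i) ^+ 2 <= (\sum_(i | B i) 1) * \sum_(i | B i) a i ^+ 2.
Proof.
move=> ha.
have h : \sum_(i | B i) \sum_(j | B j) (a i - a j) ^+ 2 =
   2 * ((\sum_(i | B i) 1) * \sum_(i | B i) a i ^+ 2 - (\sum_(i | B i) a i) ^+ 2).
  transitivity (\sum_(i | B i) \sum_(j | B j) (a i ^+ 2 + a j ^+ 2 - 2 * (a i * a j))).
    by apply: eq_bigr => i _; apply: eq_bigr => j _; ring.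
  rewrite (eq_bigr (fun i => \sum_(j | B j) a i ^+ 2 + \sum_(j | B j) a j ^+ 2
      - 2 * (a i * \sum_(j | B j) a j))); last first.
    by move=> i _; rewrite sumrB big_split /= !mulr_sumr.
  rewrite !sumrB big_split /=.
  have e1 : \sum_(i | B i) \sum_(j | B j) a i ^+ 2 =
      (\sum_(i | B i) 1) * \sum_(i | B i) a i ^+ 2.
    rewrite mulrC mulr_suml; apply: eq_bigr => i _.
    by rewrite mulr_sumr; apply: eq_bigr => j _; rewrite mulr1.
  have e2 : \sum_(i | B i) \sum_(j | B j) a j ^+ 2 =
      (\sum_(i | B i) 1) * \sum_(i | B i) a i ^+ 2.
    by rewrite mulr_suml; apply: eq_bigr => i _; rewrite mul1r.
  have e3 : \sum_(i | B i) 2 * (a i * \sum_(j | B j) a j) =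
      2 * (\sum_(i | B i) a i) ^+ 2.
    by rewrite -mulr_sumr -mulr_suml expr2.
  rewrite e1 e2 e3; ring.
have h0 : 0 <= \sum_(i | B i) \sum_(j | B j) (a i - a j) ^+ 2.
  apply: sumr_ge0 => i _; apply: sumr_ge0 => j _.
  by rewrite -realEsqr realB // ger0_real.
rewrite h pmulr_rge0 // in h0.
by rewrite -subr_ge0.
Qed.

Section NumBounds.
Variables (I : finType) (d : I -> algC).
Hypothesis hd : forall i, 0 <= d i.
Hypothesis h1 : \sum_i d i = 1.

Let s i := sqrtC (d i).
Let a (p : I * I) := s p.1 * s p.2.
Let Y := \sum_(p : I * I | p.1 != p.2) a p.
Let Q := \sum_(p : I * I | p.1 != p.2) a p ^+ 2.

Lemma s_ge0 i : 0 <= s i. Proof. by rewrite sqrtC_ge0. Qed.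
Lemma a_ge0 p : 0 <= a p. Proof. by rewrite mulr_ge0 // s_ge0. Qed.
Lemma ss i : s i * s i = d i. Proof. by rewrite -expr2 sqrtCK. Qed.

Lemma LY : (\sum_i s i) ^+ 2 - 1 = Y.
Proof.
rewrite expr2 mulr_suml.
rewrite (eq_bigr (fun i => \sum_j s i * s j)); last by move=> i _; rewrite mulr_sumr.
rewrite sum_diag_split -h1.
under eq_bigr do rewrite ss.
by rewrite addrC addKr.
Qed.

Lemma LQ : 1 - \sum_i d i ^+ 2 = Q.
Proof.
have -> : (1 : algC) = \sum_i \sum_j d i * d j.
  by rewrite -(expr1n _ 2) -h1 expr2 mulr_suml; apply: eq_bigr => i _; rewrite mulr_sumr.
rewrite sum_diag_split.
under eq_bigr do rewrite -expr2.
rewrite addrC addKr /Q; apply: eq_bigr => p _.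
by rewrite /a exprMn !sqrtCK.
Qed.

Lemma Y_ge0 : 0 <= Y. Proof. by apply: sumr_ge0 => p _; apply: a_ge0. Qed.
Lemma Q_ge0 : 0 <= Q.
Proof. by apply: sumr_ge0 => p _; apply: exprn_ge0; apply: a_ge0. Qed.

Lemma L1 : 2 * Q <= Y ^+ 2.
Proof.
rewrite expr2 {1}/Y mulr_suml /Q mulr_sumr.
apply: ler_sum => p hp.
have hY : 2 * a p <= Y.
  rewrite /Y (bigD1 p) //=.
  have hp' : (p.2, p.1) != p.
    by case: p hp => x y /=; apply: contra; rewrite xpair_eqE => /andP[/eqP ->].
  rewrite (bigD1 (p.2, p.1)) /=; last by rewrite eq_sym hp hp'.
  have -> : a (p.2, p.1) = a p by rewrite /a mulrC.
  rewrite mulr_natl addrA -mulr2n lerDl.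
  by apply: sumr_ge0 => q _; apply: a_ge0.
rewrite expr2 mulrA mulrC.
by apply: ler_wpM2l => //; apply: a_ge0.
Qed.

Let Z := [pred i | d i != 0].

Lemma card_off :
  #|[pred p : I * I | (p.1 != p.2) && ((p.1 \in Z) && (p.2 \in Z))]| =
  (#|Z| * (#|Z| - 1))%N.
Proof.
rewrite -sum1_card.
rewrite (eq_bigl (fun p : I * I => (fun i => i \in Z) p.1 &&
   (fun i j => (j \in Z) && (j != i)) p.1 p.2)); last first.
  by move=> p; rewrite !inE /= eq_sym; case: (p.2 != p.1); case: (d p.1 != 0); case: (d p.2 != 0).
rewrite -(pair_big_dep (fun i => i \in Z) (fun i j => (j \in Z) && (j != i))
   (fun _ _ => 1%N)) /=.
rewrite (eq_bigr (fun _ => #|Z| - 1)%N).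
  by rewrite sum_nat_const mulnC.
move=> i iZ; rewrite sum1_card.
rewrite (cardD1 i Z) iZ add1n subSS subn0; apply: eq_card => j.
by rewrite !inE andbC.
Qed.

Lemma L2 : Y ^+ 2 <= (#|Z| * (#|Z| - 1))%:R * Q.
Proof.
pose B (p : I * I) := (p.1 != p.2) && ((p.1 \in Z) && (p.2 \in Z)).
have eY : Y = \sum_(p | B p) a p.
  rewrite /Y (bigID (fun p => (p.1 \in Z) && (p.2 \in Z))) /=.
  rewrite [X in _ + X]big1 ?addr0 //.
  move=> p /andP[_]; rewrite negb_and !inE !negbK.
  by case/orP => /eqP h; rewrite /a /s h sqrtC0 ?mul0r ?mulr0.
have eQ : \sum_(p | B p) a p ^+ 2 <= Q.
  rewrite /Q [X in _ <= X](bigID (fun p => (p.1 \in Z) && (p.2 \in Z))) /= -[X in X <= _]addr0; apply: lerD; first exact: lexx.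
  by apply: sumr_ge0 => p _; apply: exprn_ge0; apply: a_ge0.
have hc : \sum_(p | B p) (1 : algC) = (#|Z| * (#|Z| - 1))%:R.
  by rewrite -card_off -sumr_const.
rewrite eY; apply: le_trans (cauchy_schwarz B a_ge0) _.
by rewrite hc; apply: ler_wpM2l => //; apply: ler0n.
Qed.

End NumBounds.

Lemma sum_pairE (S R : finType) (F : S * R -> algC) :
  \sum_x F x = \sum_s \sum_r F (s, r).
Proof. by rewrite pair_bigA; apply: eq_bigr => -[]. Qed.

Section Bip2.
Variables (S R : finType) (psi : S * R -> algC).

Definition pur := \sum_s \sum_s' (\sum_r psi (s, r) * (psi (s', r))^*) *
                                  (\sum_r psi (s', r) * (psi (s, r))^*).

Lemma trGS : \tr (gram (GS psi)) = \sum_x `|psi x| ^+ 2.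
Proof.
rewrite /mxtrace sum_pairE.
rewrite -(@sum_enumv S (fun s => \sum_r `|psi (s, r)| ^+ 2)).
apply: eq_bigr => i _; rewrite mxE.
rewrite -(@sum_enumv R (fun r => `|psi (enum_val i, r)| ^+ 2)).
by apply: eq_bigr => j _; rewrite !mxE normCK.
Qed.

Lemma trGR : \tr (gram (GR psi)) = \sum_x `|psi x| ^+ 2.
Proof.
rewrite /mxtrace sum_pairE exchange_big.
rewrite -(@sum_enumv R (fun r => \sum_s `|psi (s, r)| ^+ 2)).
apply: eq_bigr => i _; rewrite mxE.
rewrite -(@sum_enumv S (fun s => `|psi (s, enum_val i)| ^+ 2)).
by apply: eq_bigr => j _; rewrite !mxE normCK.
Qed.

Lemma pur_tr : \tr (gram (GS psi) *m gram (GS psi)) = pur.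
Proof.
rewrite /mxtrace /pur -(@sum_rank S (fun i => (gram (GS psi) *m gram (GS psi)) i i)).
apply: eq_bigr => s _; rewrite mxE.
rewrite -(@sum_rank S (fun j => gram (GS psi) (enum_rank s) j * gram (GS psi) j (enum_rank s))).
by apply: eq_bigr => s' _; rewrite !MS_entry.
Qed.

Lemma pur_eq : \tr (gram (GR psi) *m gram (GR psi)) = pur.
Proof.
rewrite -pur_tr.
have -> : GR psi = (GS psi)^T by apply/matrixP => i j; rewrite !mxE.
set G := GS psi; rewrite /gram.
rewrite -mxtrace_tr !trmx_mul !trmxK.
rewrite -map_trmx.
rewrite -!mulmxA [LHS]mxtrace_mulC.
by rewrite !mulmxA.
Qed.

End Bip2.

Lemma sqrtC_le (a y : algC) : 0 <= a -> 0 <= y -> a <= y ^+ 2 -> sqrtC a <= y.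
Proof.
move=> ha hy hay; rewrite -(sqrCK hy) ler_sqrtC // nnegrE //.
exact: exprn_ge0.
Qed.

Lemma le_sqrtC (a y : algC) : 0 <= y -> y ^+ 2 <= a -> y <= sqrtC a.
Proof.
move=> hy hya; have ha : 0 <= a by apply: le_trans hya; apply: exprn_ge0.
by rewrite -(sqrCK hy) ler_sqrtC // nnegrE // exprn_ge0.
Qed.

Section NumCor.
Variables (I : finType) (d : I -> algC).
Hypothesis hd : forall i, 0 <= d i.
Hypothesis h1 : \sum_i d i = 1.

Lemma num_Y_ge0 : 0 <= (\sum_i sqrtC (d i)) ^+ 2 - 1.
Proof. by rewrite (LY h1); apply: Y_ge0. Qed.

Lemma num_Q_ge0 : 0 <= 1 - \sum_i d i ^+ 2.
Proof. by rewrite (LQ h1); apply: Q_ge0. Qed.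

Lemma num_lower :
  sqrtC (2 * (1 - \sum_i d i ^+ 2)) <= (\sum_i sqrtC (d i)) ^+ 2 - 1.
Proof.
apply: sqrtC_le; last 1 first.
- by rewrite (LY h1) (LQ h1); apply: L1.
- by rewrite mulr_ge0 // num_Q_ge0.
- exact: num_Y_ge0.
Qed.

Lemma num_upper (k : nat) : leq #|[pred i | d i != 0]| k ->
  (\sum_i sqrtC (d i)) ^+ 2 - 1 <= sqrtC ((k * (k - 1))%:R * (1 - \sum_i d i ^+ 2)).
Proof.
move=> hk; apply: le_sqrtC; first exact: num_Y_ge0.
rewrite (LY h1) (LQ h1); apply: le_trans (L2 hd) _.
apply: ler_wpM2r; first exact: Q_ge0.
by rewrite ler_nat leq_mul // leq_sub2r.
Qed.
End NumCor.

Section Cut.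
Variables (S R : finType) (psi : S * R -> algC).
Hypothesis hn : \sum_x `|psi x| ^+ 2 = 1.

Let xS := \sum_k sqrtC (dS psi k).
Let xR := \sum_k sqrtC (dR psi k).
Let Q := 1 - pur psi.

Lemma hdS k : 0 <= dS psi k. Proof. exact: gram_d_ge0. Qed.
Lemma hdR k : 0 <= dR psi k. Proof. exact: gram_d_ge0. Qed.
Lemma h1S : \sum_k dS psi k = 1. Proof. by rewrite /dS gram_tr trGS. Qed.
Lemma h1R : \sum_k dR psi k = 1. Proof. by rewrite /dR gram_tr trGR. Qed.
Lemma PS : \sum_k dS psi k ^+ 2 = pur psi. Proof. by rewrite /dS gram_tr2 pur_tr. Qed.
Lemma PR : \sum_k dR psi k ^+ 2 = pur psi. Proof. by rewrite /dR gram_tr2 pur_eq. Qed.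

Lemma xS_ge0 : 0 <= xS. Proof. by apply: sumr_ge0 => k _; rewrite sqrtC_ge0 hdS. Qed.
Lemma xR_ge0 : 0 <= xR. Proof. by apply: sumr_ge0 => k _; rewrite sqrtC_ge0 hdR. Qed.

Lemma Q_ge0' : 0 <= Q.
Proof. by rewrite /Q -PS; apply: num_Q_ge0; [apply: hdS | apply: h1S]. Qed.

Lemma cut_val : trnorm (mx_of (ptS psi)) = xS * xR.
Proof. exact: trnorm_pt. Qed.

Lemma cut_lower : sqrtC (2 * Q) <= xS * xR - 1.
Proof.
set h := sqrtC (2 * Q).
have hh : 0 <= h by rewrite sqrtC_ge0 mulr_ge0 // Q_ge0'.
have hS : 1 + h <= xS ^+ 2.
  rewrite -lerBrDl /h /Q -PS; apply: num_lower; [apply: hdS | apply: h1S].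
have hR : 1 + h <= xR ^+ 2.
  rewrite -lerBrDl /h /Q -PR; apply: num_lower; [apply: hdR | apply: h1R].
have h2 : (1 + h) ^+ 2 <= (xS * xR) ^+ 2.
  rewrite exprMn expr2; apply: ler_pM => //; by rewrite addr_ge0.
have : 1 + h <= xS * xR.
  rewrite -(sqrCK (mulr_ge0 xS_ge0 xR_ge0)); apply: le_sqrtC => //.
  by rewrite addr_ge0.
by rewrite lerBrDl addrC.
Qed.

Lemma cut_upper (k : nat) :
  leq #|[pred i | dS psi i != 0]| k -> leq #|[pred i | dR psi i != 0]| k ->
  xS * xR - 1 <= sqrtC ((k * (k - 1))%:R * Q).
Proof.
move=> hkS hkR.
set g := sqrtC _.
have hS : xS ^+ 2 - 1 <= g.
  rewrite /g /Q -PS; apply: num_upper => //; [apply: hdS | apply: h1S].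
have hR : xR ^+ 2 - 1 <= g.
  rewrite /g /Q -PR; apply: num_upper => //; [apply: hdR | apply: h1R].
have hsq : 2 * (xS * xR) <= xS ^+ 2 + xR ^+ 2.
  rewrite -subr_ge0.
  have -> : xS ^+ 2 + xR ^+ 2 - 2 * (xS * xR) = (xS - xR) ^+ 2 by ring.
  by rewrite -realEsqr realB // ger0_real // ?xS_ge0 ?xR_ge0.
have : 2 * (xS * xR - 1) <= 2 * g.
  apply: le_trans (_ : (xS ^+ 2 - 1) + (xR ^+ 2 - 1) <= _).
    have -> : 2 * (xS * xR - 1) = 2 * (xS * xR) - 2 by ring.
    have -> : xS ^+ 2 - 1 + (xR ^+ 2 - 1) = xS ^+ 2 + xR ^+ 2 - 2 by ring.
    by rewrite lerD2r.
  have -> : 2 * g = g + g by ring.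
  exact: lerD.
by rewrite ler_pM2l // ltr0n.
Qed.
End Cut.

Lemma prod2 (I J : finType) (f : I -> algC) (g : J -> algC) :
  (\sum_i f i) * (\sum_j g j) = \sum_i \sum_j f i * g j.
Proof. by rewrite mulr_suml; apply: eq_bigr => i _; rewrite mulr_sumr. Qed.

Lemma prod4 (I J : finType) (f g : I -> J -> algC) :
  (\sum_b \sum_c f b c) * (\sum_b \sum_c g b c) =
  \sum_b \sum_b' \sum_c \sum_c' f b c * g b' c'.
Proof.
rewrite prod2; apply: eq_bigr => b _; apply: eq_bigr => b' _; exact: prod2.
Qed.

Lemma swap22 (I J K L : finType) (F : I -> J -> K -> L -> algC) :
  \sum_i \sum_j \sum_k \sum_l F i j k l = \sum_k \sum_l \sum_i \sum_j F i j k l.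
Proof.
transitivity (\sum_i \sum_k \sum_l \sum_j F i j k l).
  apply: eq_bigr => i _; rewrite exchange_big; apply: eq_bigr => k _; exact: exchange_big.
rewrite exchange_big; apply: eq_bigr => k _; exact: exchange_big.
Qed.

Section Pur.
Variables dA dB dC : nat.
Variable psi : idx3 dA dB dC -> algC.
Let p a b c := psi ((a, b), c).
Let q a b c := (psi ((a, b), c))^*.

Definition S6 (F : 'I_dA -> 'I_dA -> 'I_dB -> 'I_dB -> 'I_dC -> 'I_dC -> algC) :=
  \sum_a \sum_a' \sum_b \sum_b' \sum_c \sum_c' F a a' b b' c c'.

Lemma S6D F G : S6 (fun a a' b b' c c' => F a a' b b' c c' + G a a' b b' c c') = S6 F + S6 G.
Proof.
rewrite /S6 -big_split; apply: eq_bigr => a _; rewrite -big_split; apply: eq_bigr => a' _.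
rewrite -big_split; apply: eq_bigr => b _; rewrite -big_split; apply: eq_bigr => b' _.
rewrite -big_split; apply: eq_bigr => c _; rewrite -big_split; apply: eq_bigr => c' _.
by [].
Qed.

Lemma S6N F : S6 (fun a a' b b' c c' => - F a a' b b' c c') = - S6 F.
Proof.
rewrite /S6 -sumrN; apply: eq_bigr => a _; rewrite -sumrN; apply: eq_bigr => a' _.
rewrite -sumrN; apply: eq_bigr => b _; rewrite -sumrN; apply: eq_bigr => b' _.
rewrite -sumrN; apply: eq_bigr => c _; rewrite -sumrN; apply: eq_bigr => c' _.
by [].
Qed.

Lemma S6_ext F G : (forall a a' b b' c c', F a a' b b' c c' = G a a' b b' c c') -> S6 F = S6 G.
Proof.
move=> h; rewrite /S6; apply: eq_bigr => a _; apply: eq_bigr => a' _.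
apply: eq_bigr => b _; apply: eq_bigr => b' _; apply: eq_bigr => c _; apply: eq_bigr => c' _.
exact: h.
Qed.

Lemma S6_swapb F : S6 F = S6 (fun a a' b b' c c' => F a a' b' b c c').
Proof.
rewrite /S6; apply: eq_bigr => a _; apply: eq_bigr => a' _; exact: exchange_big.
Qed.

Lemma S6_swapc F : S6 F = S6 (fun a a' b b' c c' => F a a' b b' c' c).
Proof.
rewrite /S6; apply: eq_bigr => a _; apply: eq_bigr => a' _.
apply: eq_bigr => b _; apply: eq_bigr => b' _; exact: exchange_big.
Qed.

Lemma S6_ge0 F : (forall a a' b b' c c', 0 <= F a a' b b' c c') -> 0 <= S6 F.
Proof.
move=> h; rewrite /S6; apply: sumr_ge0 => a _; apply: sumr_ge0 => a' _.
apply: sumr_ge0 => b _; apply: sumr_ge0 => b' _; apply: sumr_ge0 => c _.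
by apply: sumr_ge0 => c' _.
Qed.

Let t1 a a' b b' c c' := p a b c * p a' b' c'.
Let t2 a a' b b' c c' := p a b' c * p a' b c'.
Let t3 a a' b b' c c' := p a b c' * p a' b' c.
Let t4 a a' b b' c c' := p a b' c' * p a' b c.
Let u1 a a' b b' c c' := q a b c * q a' b' c'.
Let u2 a a' b b' c c' := q a b' c * q a' b c'.
Let u3 a a' b b' c c' := q a b c' * q a' b' c.
Let u4 a a' b b' c c' := q a b' c' * q a' b c.
Let w a a' b b' c c' := t1 a a' b b' c c' - t2 a a' b b' c c' - t3 a a' b b' c c' + t4 a a' b b' c c'.
Let wq a a' b b' c c' := u1 a a' b b' c c' - u2 a a' b b' c c' - u3 a a' b b' c c' + u4 a a' b b' c c'.

Lemma key6 : 0 <= S6 (fun a a' b b' c c' => t1 a a' b b' c c' * wq a a' b b' c c').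
Proof.
have h0 : 0 <= S6 (fun a a' b b' c c' => w a a' b b' c c' * wq a a' b b' c c').
  apply: S6_ge0 => a a' b b' c c'.
  have -> : wq a a' b b' c c' = (w a a' b b' c c')^*.
    by rewrite /wq /w /u1 /u2 /u3 /u4 /t1 /t2 /t3 /t4 /q !rmorphD !rmorphN !rmorphM.
  exact: mul_conjC_ge0.
have e : S6 (fun a a' b b' c c' => w a a' b b' c c' * wq a a' b b' c c') =
   4 * S6 (fun a a' b b' c c' => t1 a a' b b' c c' * wq a a' b b' c c').
  set T := S6 (fun a a' b b' c c' => t1 a a' b b' c c' * wq a a' b b' c c').
  have e2 : S6 (fun a a' b b' c c' => - (t2 a a' b b' c c' * wq a a' b b' c c')) = T.
    rewrite S6_swapb; apply: S6_ext => a a' b b' c c'.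
    rewrite /t1 /t2 /wq /u1 /u2 /u3 /u4; ring.
  have e3 : S6 (fun a a' b b' c c' => - (t3 a a' b b' c c' * wq a a' b b' c c')) = T.
    rewrite S6_swapc; apply: S6_ext => a a' b b' c c'.
    rewrite /t1 /t3 /wq /u1 /u2 /u3 /u4; ring.
  have e4 : S6 (fun a a' b b' c c' => t4 a a' b b' c c' * wq a a' b b' c c') = T.
    rewrite S6_swapb S6_swapc; apply: S6_ext => a a' b b' c c'.
    rewrite /t1 /t4 /wq /u1 /u2 /u3 /u4; ring.
  transitivity (S6 (fun a a' b b' c c' =>
     ((t1 a a' b b' c c' * wq a a' b b' c c' +
       - (t2 a a' b b' c c' * wq a a' b b' c c')) +
       - (t3 a a' b b' c c' * wq a a' b b' c c')) +
       t4 a a' b b' c c' * wq a a' b b' c c')).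
    by apply: S6_ext => a a' b b' c c'; rewrite /w; ring.
  rewrite !S6D e2 e3 e4 -/T; ring.
by move: h0; rewrite e pmulr_rge0 // ltr0n.
Qed.


Definition psiA (x : 'I_dA * ('I_dB * 'I_dC)) := psi ((x.1, x.2.1), x.2.2).
Definition psiB (x : ('I_dA * 'I_dC) * 'I_dB) := psi ((x.1.1, x.2), x.1.2).
Definition psiC (x : ('I_dA * 'I_dB) * 'I_dC) := psi ((x.1.1, x.1.2), x.2).

Lemma S6_one : (\sum_x `|psi x| ^+ 2) ^+ 2 = S6 (fun a a' b b' c c' => t1 a a' b b' c c' * u1 a a' b b' c c').
Proof.
have -> : \sum_x `|psi x| ^+ 2 = \sum_a \sum_b \sum_c p a b c * q a b c.
  rewrite sum_pairE sum_pairE; apply: eq_bigr => a _; apply: eq_bigr => b _.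
  by apply: eq_bigr => c _; rewrite normCK.
rewrite expr2 prod2 /S6; apply: eq_bigr => a _; apply: eq_bigr => a' _.
rewrite (prod4 (fun b c => p a b c * q a b c) (fun b c => p a' b c * q a' b c)).
apply: eq_bigr => b _; apply: eq_bigr => b' _; apply: eq_bigr => c _; apply: eq_bigr => c' _.
rewrite /t1 /u1; ring.
Qed.

Lemma S6_A : pur psiA = S6 (fun a a' b b' c c' => t1 a a' b b' c c' * u4 a a' b b' c c').
Proof.
rewrite /pur /S6; apply: eq_bigr => a _; apply: eq_bigr => a' _.
rewrite !sum_pairE.
rewrite (prod4 (fun b c => psiA (a, (b, c)) * (psiA (a', (b, c)))^* )
               (fun b c => psiA (a', (b, c)) * (psiA (a, (b, c)))^* )).
apply: eq_bigr => b _; apply: eq_bigr => b' _; apply: eq_bigr => c _; apply: eq_bigr => c' _.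
rewrite /t1 /u4 /p /q /psiA /=; ring.
Qed.

Lemma S6_B : pur psiB = S6 (fun a a' b b' c c' => t1 a a' b b' c c' * u2 a a' b b' c c').
Proof.
rewrite /pur sum_pairE /S6; apply: eq_bigr => a _.
under eq_bigr do rewrite sum_pairE.
rewrite exchange_big; apply: eq_bigr => a' _.
under eq_bigr do under eq_bigr do rewrite prod2.
rewrite swap22.
apply: eq_bigr => b _; apply: eq_bigr => b' _; apply: eq_bigr => c _; apply: eq_bigr => c' _.
rewrite /t1 /u2 /p /q /psiB /=; ring.
Qed.

Lemma S6_C : pur psiC = S6 (fun a a' b b' c c' => t1 a a' b b' c c' * u3 a a' b b' c c').
Proof.
rewrite /pur sum_pairE /S6; apply: eq_bigr => a _.
under eq_bigr do rewrite sum_pairE.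
rewrite exchange_big; apply: eq_bigr => a' _.
apply: eq_bigr => b _; apply: eq_bigr => b' _.
rewrite prod2.
apply: eq_bigr => c _; apply: eq_bigr => c' _.
rewrite /t1 /u3 /p /q /psiC /=; ring.
Qed.

Lemma purity_ineq :
  pur psiB + pur psiC <= (\sum_x `|psi x| ^+ 2) ^+ 2 + pur psiA.
Proof.
have h := key6.
have e : S6 (fun a a' b b' c c' => t1 a a' b b' c c' * wq a a' b b' c c') =
  S6 (fun a a' b b' c c' => t1 a a' b b' c c' * u1 a a' b b' c c') +
  - S6 (fun a a' b b' c c' => t1 a a' b b' c c' * u2 a a' b b' c c') +
  - S6 (fun a a' b b' c c' => t1 a a' b b' c c' * u3 a a' b b' c c') +
  S6 (fun a a' b b' c c' => t1 a a' b b' c c' * u4 a a' b b' c c').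
  rewrite -!S6N -!S6D; apply: S6_ext => a a' b b' c c'; rewrite /wq; ring.
rewrite e in h; rewrite -subr_ge0 S6_one S6_A S6_B S6_C.
set X1 := S6 _ in h *; set X2 := S6 _ in h *; set X3 := S6 _ in h *; set X4 := S6 _ in h *.
have -> : X1 + X4 - (X2 + X3) = X1 + - X2 + - X3 + X4 by ring.
exact: h.
Qed.
End Pur.

Lemma sum_bij (T T' : finType) (e : T' -> T) (F : T -> algC) :
  bijective e -> \sum_x F (e x) = \sum_z F z.
Proof. by move=> be; rewrite [RHS](reindex e) //; apply: onW_bij. Qed.

Lemma adj_normal n (X : 'M[algC]_n) : adjmx X *m X \is normalmx.
Proof.
apply/normalmxP.
have -> : ((adjmx X *m X) ^t* )%sesqui = adjmx X *m X.
  rewrite /adjmx trmx_mul map_mxM !map_trmx trmxK.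
  by rewrite -map_mx_comp (map_mx_id (@conjCK _)).
by [].
Qed.

Lemma trnorm_gen (T T' : finType) (e : T' -> T) (f : T -> T -> algC) :
  bijective e ->
  trnorm (mx_of (fun x y => f (e x) (e y))) =
  \sum_k sqrtC (spectral_diag (adjmx (mx_of f) *m mx_of f) 0 k).
Proof.
move=> be.
set X := mx_of f; set A := adjmx X *m X.
have /orthomx_spectralP hA := adj_normal X; rewrite -/A in hA.
set P := spectralmx A in hA *; set D := spectral_diag A in hA *.
have Pu : P \in unitmx by exact: spectral_unit.
apply: (@trnorm_kernel _ _ _ (fun x k => invmx P (enum_rank (e x)) k)
   (fun k y => P k (enum_rank (e y))) (fun k => D 0 k)).
- move=> x y; rewrite unit_entry //.
  by rewrite (inj_eq enum_rank_inj) (inj_eq (bij_inj be)).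
- move=> u v.
  rewrite (@sum_bij _ _ e (fun z => P u (enum_rank z) * invmx P (enum_rank z) v)) //.
  by rewrite (@sum_rank T (fun i => P u i * invmx P i v)) unit_entry'.
- move=> x y.
  rewrite (@sum_bij _ _ e (fun z => (f z (e x))^* * f z (e y))) //.
  transitivity (A (enum_rank (e x)) (enum_rank (e y))).
    rewrite /A mxE -(@sum_enumv T (fun z => (f z (e x))^* * f z (e y))).
    by apply: eq_bigr => l _; rewrite /adjmx !mxE !enum_rankK.
  by rewrite {1}hA invmx_diag_entry.
Qed.

Lemma trnorm_reidx (T T' : finType) (e : T' -> T) (f : T -> T -> algC) :
  bijective e ->
  trnorm (mx_of f) = trnorm (mx_of (fun x y => f (e x) (e y))).
Proof.
move=> be; rewrite (trnorm_gen f be).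
have bid : bijective (@id T) by exists id.
exact: (trnorm_gen f bid).
Qed.

Lemma sum_delta n (i0 : 'I_n) (F : 'I_n -> algC) :
  \sum_a (i0 == a)%:R * F a = F i0.
Proof.
rewrite (bigD1 i0) //= eqxx mul1r big1 ?addr0 // => a.
by rewrite eq_sym => /negbTE ->; rewrite mul0r.
Qed.

Section Tri.
Variables dA dB dC : nat.
Variable psi : idx3 dA dB dC -> algC.
Hypothesis hn : \sum_x `|psi x| ^+ 2 = 1.
Local Notation rho := (proj_state psi).

Let eA (x : 'I_dA * ('I_dB * 'I_dC)) : idx3 dA dB dC := ((x.1, x.2.1), x.2.2).
Let eB (x : ('I_dA * 'I_dC) * 'I_dB) : idx3 dA dB dC := ((x.1.1, x.2), x.1.2).
Let eC (x : ('I_dA * 'I_dB) * 'I_dC) : idx3 dA dB dC := x.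

Lemma beA : bijective eA.
Proof. by exists (fun x => (x.1.1, (x.1.2, x.2))) => [[a [b c]]|[[a b] c]]. Qed.
Lemma beB : bijective eB.
Proof. by exists (fun x => ((x.1.1, x.2), x.1.2)) => [[[a c] b]|[[a b] c]]. Qed.
Lemma beC : bijective eC.
Proof. by exists id. Qed.

Lemma negA : neg_A_CB rho = (trnorm (mx_of (ptS (psiA psi))) - 1) / 2%:R.
Proof. by rewrite /neg_A_CB /negativity_of_pt (trnorm_reidx _ beA). Qed.
Lemma negB : neg_AC_B rho = (trnorm (mx_of (ptS (psiB psi))) - 1) / 2%:R.
Proof. by rewrite /neg_AC_B /negativity_of_pt (trnorm_reidx _ beB). Qed.
Lemma negC : neg_AB_C rho = (trnorm (mx_of (ptS (psiC psi))) - 1) / 2%:R.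
Proof. by rewrite /neg_AB_C /negativity_of_pt (trnorm_reidx _ beC). Qed.

Lemma hnA : \sum_x `|psiA psi x| ^+ 2 = 1.
Proof. by rewrite -hn -(@sum_bij _ _ eA (fun z => `|psi z| ^+ 2)) //; apply: beA. Qed.
Lemma hnB : \sum_x `|psiB psi x| ^+ 2 = 1.
Proof. by rewrite -hn -(@sum_bij _ _ eB (fun z => `|psi z| ^+ 2)) //; apply: beB. Qed.
Lemma hnC : \sum_x `|psiC psi x| ^+ 2 = 1.
Proof. by rewrite -hn; apply: eq_bigr => -[[a b] c]. Qed.

Lemma rank_gramA : (\rank (gram (GS (psiA psi))) <= \rank (reducedA rho))%N.
Proof.
pose E : 'M[algC]_(#|'I_dA|, dA) := \matrix_(i, a) (enum_val i == a)%:R.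
have -> : gram (GS (psiA psi)) = E *m reducedA rho *m E^T.
  apply/matrixP => i j.
  transitivity (reducedA rho (enum_val i) (enum_val j)).
    rewrite -{1}[i]enum_valK -{1}[j]enum_valK MS_entry mxE sum_pairE.
    by apply: eq_bigr => b _; apply: eq_bigr => c _.
  rewrite [RHS]mxE.
  rewrite (eq_bigr (fun a => (enum_val j == a)%:R *
      (\sum_a' (enum_val i == a')%:R * reducedA rho a' a))); last first.
    by move=> a _; rewrite !mxE mulrC; congr (_ * _); apply: eq_bigr => a' _; rewrite !mxE.
  by rewrite sum_delta sum_delta.
apply: leq_trans (mxrankM_maxl _ _) _; exact: mxrankM_maxr.
Qed.


Lemma countSA : leq #|[pred i | dS (psiA psi) i != 0]| (\rank (reducedA rho)).
Proof. exact: leq_trans (gram_count _) rank_gramA. Qed.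

Lemma countRA : leq #|[pred i | dR (psiA psi) i != 0]| (\rank (reducedA rho)).
Proof.
apply: leq_trans (gram_count _) _; apply: leq_trans (mxrankM_maxl _ _) _.
have -> : GR (psiA psi) = (GS (psiA psi))^T by apply/matrixP => i j; rewrite !mxE.
by rewrite mxrank_tr; apply: leq_trans (gram_rank _) rank_gramA.
Qed.

End Tri.

Lemma final_num (r : nat) (tA tB tC QA QB QC : algC) : (2 <= r)%N ->
  0 <= QA -> 0 <= QB -> 0 <= QC -> QA <= QB + QC ->
  tA - 1 <= sqrtC ((r * (r - 1))%:R * QA) ->
  sqrtC (2 * QB) <= tB - 1 -> sqrtC (2 * QC) <= tC - 1 ->
  sqrtC (2%:R / (r%:R * (r%:R - 1))) * ((tA - 1) / 2%:R) <=
    (tB - 1) / 2%:R + (tC - 1) / 2%:R.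
Proof.
move=> hr hQA hQB hQC hQ hA lB lC.
set K := r%:R * (r%:R - 1).
have eK : (r * (r - 1))%:R = K :> algC by rewrite natrM natrB // ltnW.
have Kgt0 : 0 < K by rewrite -eK ltr0n muln_gt0 subn_gt0 (ltn_trans _ hr) // (ltnW hr).
have K0 : K != 0 by rewrite gt_eqF.
set c := sqrtC (2%:R / K).
have c0 : 0 <= c by rewrite sqrtC_ge0 divr_ge0 // ltW.
have h2 : c * sqrtC (K * QA) = sqrtC (2 * QA).
  have K0' : 0 <= K := ltW Kgt0.
  rewrite -sqrtCM.
  - by rewrite mulrA -(mulrA 2%:R) mulVf // mulr1.
  - by rewrite nnegrE divr_ge0.
  - by rewrite nnegrE mulr_ge0.
set hB := sqrtC (2 * QB) in lB *; set hC := sqrtC (2 * QC) in lC *.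
have hB0 : 0 <= hB by rewrite sqrtC_ge0 mulr_ge0.
have hC0 : 0 <= hC by rewrite sqrtC_ge0 mulr_ge0.
have step3 : sqrtC (2 * QA) <= hB + hC.
  apply: sqrtC_le; [by rewrite mulr_ge0 | by rewrite addr_ge0 |].
  rewrite -subr_ge0.
  have -> : (hB + hC) ^+ 2 - 2 * QA = 2 * (QB + QC - QA) + 2 * (hB * hC) + (hB ^+ 2 - 2 * QB) + (hC ^+ 2 - 2 * QC) by ring.
  rewrite /hB /hC !sqrtCK !subrr !addr0.
  by rewrite addr_ge0 // mulr_ge0 // ?subr_ge0 // mulr_ge0.
have main : c * (tA - 1) <= (tB - 1) + (tC - 1).
  apply: le_trans (ler_wpM2l c0 hA) _.
  rewrite eK h2; apply: le_trans step3 _; exact: lerD.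
rewrite mulrA -mulrDl; apply: ler_wpM2r => //.
by rewrite invr_ge0 ler0n.
Qed.

Theorem main_thm (dA dB dC : nat) (psi : idx3 dA dB dC -> algC) :
  \sum_x `|psi x| ^+ 2 = 1 ->
  (2 <= \rank (reducedA (proj_state psi)))%N ->
  sqrtC (2%:R / ((\rank (reducedA (proj_state psi)))%:R *
                 ((\rank (reducedA (proj_state psi)))%:R - 1)))
    * neg_A_CB (proj_state psi)
  <= neg_AC_B (proj_state psi) + neg_AB_C (proj_state psi).
Proof.
move=> hn hr.
rewrite negA negB negC.
have hnA := hnA hn; have hnB := hnB hn; have hnC := hnC hn.
apply: (final_num hr (Q_ge0' hnA) (Q_ge0' hnB) (Q_ge0' hnC)).
- have := purity_ineq psi; rewrite hn expr1n => h.
  rewrite -subr_ge0; rewrite -subr_ge0 in h.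
  by have -> : 1 - pur (psiB psi) + (1 - pur (psiC psi)) - (1 - pur (psiA psi)) =
     1 + pur (psiA psi) - (pur (psiB psi) + pur (psiC psi)) by ring.
- by rewrite cut_val; apply: cut_upper => //; [apply: countSA | apply: countRA].
- by rewrite cut_val; apply: cut_lower.
- by rewrite cut_val; apply: cut_lower.
Qed.



Theorem lemma1 (dA dB dC : nat) (psi : idx3 dA dB dC -> algC) :
  \sum_x `|psi x| ^+ 2 = 1 ->
  (2 <= \rank (reducedA (proj_state psi)))%N ->
  sqrtC (2%:R / ((\rank (reducedA (proj_state psi)))%:R *
                 ((\rank (reducedA (proj_state psi)))%:R - 1)))
    * neg_A_CB (proj_state psi)
  <= neg_AC_B (proj_state psi) + neg_AB_C (proj_state psi).
Proof. exact: main_thm. Qed.
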